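(* Let $n\ge3$, $2\le i\le n-1$, $\mathfrak g=\mathfrak{sp}(n,\mathbb C)$, $\mathfrak q$ of type $C_n(i)$, $\mu=\varepsilon_1+\varepsilon_{i+1}$, $\epsilon_\gamma=\varepsilon_2-\varepsilon_{i+1}$. Then $\mathrm{pr}_{\mathfrak l_\gamma\otimes\mathfrak z(\mathfrak n)}(\tau_2(X_\mu+X_{\epsilon_\gamma}))$ is a highest weight vector for $V(\mu+\epsilon_\gamma)$, the irreducible $\mathfrak l$-submodule of $\mathfrak l_\gamma\otimes\mathfrak z(\mathfrak n)$ with highest weight $\mu+\epsilon_\gamma=\varepsilon_1+\varepsilon_2$.
   Context: $\mathfrak g=\mathfrak{sp}(n,\mathbb C)\subset\mathfrak{gl}(2n,\mathbb C)$; $\hat j=j+n$, $E_{ab}$ matrix units. Cartan $\mathfrak h$ = matrices $\sum_j h_j(E_{jj}-E_{\hat j\hat j})$, $\varepsilon_j$ picks $h_j$. Roots $\pm\varepsilon_j\pm\varepsilon_k$ ($j<k$), $\pm2\varepsilon_j$; positive system with simple roots $\alpha_j=\varepsilon_j-\varepsilon_{j+1}$ ($j<n$), $\alpha_n=2\varepsilon_n$. Root vectors: $X_{\varepsilon_j-\varepsilon_k}=E_{jk}-E_{\hat k\hat j}$ ($j\ne k$), $X_{\varepsilon_j+\varepsilon_k}=E_{j\hat k}+E_{k\hat j}$, $X_{-(\varepsilon_j+\varepsilon_k)}=E_{\hat jk}+E_{\hat kj}$, $X_{2\varepsilon_j}=E_{j\hat j}$, $X_{-2\varepsilon_j}=E_{\hat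 jj}$. Killing form $\kappa=c_0\mathrm{Tr}(XY)$, $c_0>0$. $\mathfrak q=\mathfrak l\oplus\mathfrak n$ is the standard maximal parabolic subalgebra determined by $\alpha_i$; grading $\mathfrak g=\bigoplus_{j=-2}^2\mathfrak g(j)$ by the $\alpha_i$-coefficient, $\mathfrak l=\mathfrak g(0)$, $\Delta(\mathfrak g(1))=\{\varepsilon_j\pm\varepsilon_k:1\le j\le i<k\le n\}$, $\mathfrak z(\mathfrak n)=\mathfrak g(2)$ with roots $\varepsilon_j+\varepsilon_k$ ($j<k\le i$), $2\varepsilon_j$ ($j\le i$). $\mathfrak l=\mathfrak z(\mathfrak l)\oplus\mathfrak l_\gamma\oplus\mathfrak l_{n\gamma}$ with $\mathfrak l_\gamma\cong\mathfrak{sl}(i,\mathbb C)$ (simple roots $\alpha_1,\dots,\alpha_{i-1}$) and $\mathfrak l_{n\gamma}\cong\mathfrak{sp}(n-i,\mathbb C)$ (simple roots $\alpha_{i+1},\dots,\alpha_n$); $\mathrm{pr}_{\mathfrak l_\gamma\otimes\mathfrak z(\mathfrak n)}$ is the projection of $\mathfrak l\otimes\mathfrak z(\mathfrak n)$ onto $\mathfrak l_\gamma\otimes\mathfrak z(\mathfrak n)$ along this decomposition; $\mathfrak l$ acts on tensor products by the usual tensor product action. Highest weight vector means a weight vector of weight $\mu+\epsilon_\gamma$ annihilated by all $X_\alpha$, $\alpha\in\Pi\setminus\{\alpha_i\}$. $\omega=\frac1{c_0}\sum_{j=1}^iX_{-2\varepsilon_j}\otimes X_{2\varepsilon_j}+\frac1{2c_0}\sum_{1\le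 j<k\le i}X_{-(\varepsilon_j+\varepsilon_k)}\otimes X_{\varepsilon_j+\varepsilon_k}$ and $\tau_2(X)=\tfrac12(\mathrm{ad}(X)^2\otimes\mathrm{Id})\omega$ for $X\in\mathfrak g(1)$. *)

(* Defs.v *)
From HB Require Import structures.
From mathcomp Require Import all_boot all_order all_algebra.
Set Implicit Arguments. Unset Strict Implicit. Unset Printing Implicit Defensive.
Import Order.TTheory GRing.Theory Num.Theory.
Local Open Scope ring_scope.

Section SpDefs.
Variable R : numClosedFieldType.
Variable n : nat.

(* gl(2n) = 'M_(n+n); rows/columns are indexed 1..2n in the paper, here by
   ordinals 0..2n-1; index j (1-based) is the ordinal with value j-1. *)
Notation N := (n + n)%N.
Notation mat := 'M[R]_N.

Definition hat (j : nat) : nat := (j + n)%N.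

Definition E (a b : nat) : mat :=
  \matrix_(r, c) ((r.+1 == a) && (c.+1 == b))%:R.

Definition Xminus (j k : nat) : mat := E j k - E (hat k) (hat j).
Definition Xplus (j k : nat) : mat := E j (hat k) + E k (hat j).
Definition Xnegplus (j k : nat) : mat := E (hat j) k + E (hat k) j.
Definition Xtwo (j : nat) : mat := E j (hat j).
Definition Xnegtwo (j : nat) : mat := E (hat j) j.

Definition cartan (h : nat -> R) : mat :=
  \sum_(1 <= j < n.+1) h j *: (E j j - E (hat j) (hat j)).

Definition ad (X Y : mat) : mat := X *m Y - Y *m X.

Definition Jmx : mat := \sum_(1 <= j < n.+1) (E j (hat j) - E (hat j) j).
Definition in_sp (Y : mat) : Prop := Y^T *m Jmx + Jmx *m Y = 0.

(* Tensors in gl(2n) (x) gl(2n): T represents sum_{(a,b)} e_{ab} (x) T(a,b),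
   where e_{ab} = delta_mx a b. *)
Definition tens := {ffun 'I_N * 'I_N -> mat}.

Definition tpure (A B : mat) : tens := [ffun p => A p.1 p.2 *: B].
(* f (x) Id *)
Definition tmapl (f : mat -> mat) (T : tens) : tens :=
  [ffun p => \sum_(q : 'I_N * 'I_N) (f (delta_mx q.1 q.2)) p.1 p.2 *: T q].
Definition tmapr (g : mat -> mat) (T : tens) : tens := [ffun p => g (T p)].

Definition tact (X : mat) (T : tens) : tens := tmapl (ad X) T + tmapr (ad X) T.

(* membership of T in U (x) W for subspaces U, W of gl(2n):
   all left slices lie in U and all right components lie in W *)
Definition tens_in (U W : mat -> Prop) (T : tens) : Prop :=
  (forall p, W (T p)) /\
  (forall r c : 'I_N, U (\matrix_(a, b) T (a, b) r c)).

Variable i : nat.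

Definition omega (c0 : R) : tens :=
  c0^-1 *: \sum_(1 <= j < i.+1) tpure (Xnegtwo j) (Xtwo j)
  + (2 * c0)^-1 *: \sum_(1 <= j < i.+1) \sum_(j.+1 <= k < i.+1)
        tpure (Xnegplus j k) (Xplus j k).

Definition tau2 (c0 : R) (X : mat) : tens :=
  2^-1 *: tmapl (fun Y => ad X (ad X Y)) (omega c0).

(* l_gamma ~ sl(i): span of the X_{e_j-e_k} (j<>k<=i) and the coroots,
   i.e. sum_{j,k<=i} a_jk (E_jk - E_{hat k hat j}) with trace(a) = 0 *)
Definition in_lgamma (Y : mat) : Prop :=
  exists a : nat -> nat -> R,
    \sum_(1 <= j < i.+1) a j j = 0 /\
    Y = \sum_(1 <= j < i.+1) \sum_(1 <= k < i.+1) a j k *: Xminus j k.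
Definition in_zl (Y : mat) : Prop :=
  exists c : R, Y = c *: \sum_(1 <= j < i.+1) (E j j - E (hat j) (hat j)).
Definition outer_idx (r : nat) : bool :=
  ((i < r <= n) || (n + i < r <= n + n))%N.
Definition in_lngamma (Y : mat) : Prop :=
  in_sp Y /\ forall r c : 'I_N,
    ~~ (outer_idx r.+1 && outer_idx c.+1) -> Y r c = 0.
Definition in_zn (Y : mat) : Prop :=
  in_sp Y /\ forall r c : 'I_N,
    ~~ ((1 <= r.+1 <= i) && (n + 1 <= c.+1 <= n + i))%N -> Y r c = 0.

Definition in_zl_plus_lngamma (Y : mat) : Prop :=
  exists Y1 Y2, in_zl Y1 /\ in_lngamma Y2 /\ Y = Y1 + Y2.

(* T = pr_{l_gamma (x) z(n)} T0, for T0 in l (x) z(n) = (z(l)+l_gamma+l_ngamma)(x) z(n):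
   T is the l_gamma (x) z(n)-component of T0 along (z(l) + l_ngamma) (x) z(n). *)
Definition is_pr_lgamma_zn (T0 T : tens) : Prop :=
  tens_in in_lgamma in_zn T /\ tens_in in_zl_plus_lngamma in_zn (T0 - T).

Definition Xsimple (j : nat) : mat :=
  if (j < n)%N then Xminus j j.+1 else Xtwo n.

(* highest weight vector of weight lam (lam(h) for Cartan coefficients h),
   w.r.t. the simple roots of l, i.e. Pi \ {alpha_i} *)
Definition is_hwv (lam : (nat -> R) -> R) (T : tens) : Prop :=
  T != 0 /\
  (forall h : nat -> R, tact (cartan h) T = lam h *: T) /\
  (forall j, (1 <= j <= n)%N -> j != i -> tact (Xsimple j) T = 0).

End SpDefs.

(* Main.v *)
Require Import Defs.
From HB Require Import structures.
From mathcomp Require Import all_boot all_order all_algebra.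
From mathcomp Require Import zify ring lra.
Import Order.TTheory GRing.Theory Num.Theory.
Local Open Scope ring_scope.
Set Implicit Arguments. Unset Strict Implicit. Unset Printing Implicit Defensive.

Ltac bsimp1 :=
  match goal with
  | |- context [(?x == ?y :> nat)] =>
      let Hb := fresh "Hb" in
      first [ have Hb : (x == y) = true by apply/eqP; rewrite /hat; lia
            | have Hb : (x == y) = false by apply/negbTE/eqP; rewrite /hat; lia ];
      rewrite Hb; clear Hb
  | |- context [(?x <= ?y)%N] =>
      let Hb := fresh "Hb" in
      first [ have Hb : (x <= y)%N = true by apply/idP; rewrite /hat; lia
            | have Hb : (x <= y)%N = false by apply/negbTE; rewrite -ltnNge; rewrite /hat; lia ];
      rewrite Hb; clear Hb
  end.
Ltac bsimp := repeat bsimp1.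

Section S.
Variable R : numClosedFieldType.
Variable n : nat.
Notation N := (n + n)%N.
Notation mat := 'M[R]_N.
Notation E := (@E R n).

Lemma mulE a b c d : E a b *m E c d = ((b == c) && (0 < b)%N && (b <= N)%N)%:R *: E a d.
Proof.
apply/matrixP => r s; rewrite !mxE.
case: (boolP ((b == c) && (0 < b)%N && (b <= N)%N)) => Hc.
- move/andP: Hc => [/andP [/eqP Hbc b0] bN]; subst c.
  have ht : (b.-1 < N)%N by lia.
  rewrite (bigD1 (Ordinal ht)) //= big1 ?addr0.
  + rewrite !mxE /= prednK //= eqxx andbT mul1r.
    by case: (r.+1 == a); case: (s.+1 == d); rewrite /= ?mulr1 ?mulr0.
  + move=> t /eqP Ht; rewrite !mxE.
    have -> : (t.+1 == b) = false.
      apply/negbTE/eqP => H; apply: Ht; apply/val_inj => /=; lia.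
    by rewrite andbF mul0r.
- rewrite mul0r big1 // => t _; rewrite !mxE.
  case E1: (t.+1 == b); case E2: (t.+1 == c); rewrite ?andbF ?andFb /= ?mulr0 ?mul0r //.
  exfalso; move/negP: Hc; apply; move/eqP: E1 => E1; move/eqP: E2 => E2.
  have := ltn_ord t; subst b c => Ht; rewrite eqxx /=; lia.
Qed.


Lemma ad_EE a b c d : ad (E a b) (E c d) =
  ((b == c) && (0 < b)%N && (b <= N)%N)%:R *: E a d - ((d == a) && (0 < d)%N && (d <= N)%N)%:R *: E c b.
Proof. by rewrite /ad !mulE. Qed.

Lemma adDl (A B Y : mat) : ad (A + B) Y = ad A Y + ad B Y.
Proof. by rewrite /ad mulmxDl mulmxDr opprD addrACA. Qed.
Lemma adDr (A B Y : mat) : ad Y (A + B) = ad Y A + ad Y B.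
Proof. by rewrite /ad mulmxDl mulmxDr opprD addrACA. Qed.
Lemma adNl (A Y : mat) : ad (- A) Y = - ad A Y.
Proof. by rewrite /ad mulNmx mulmxN opprB opprK addrC. Qed.
Lemma adNr (A Y : mat) : ad Y (- A) = - ad Y A.
Proof. by rewrite /ad mulNmx mulmxN opprB opprK addrC. Qed.
Lemma adBl (A B Y : mat) : ad (A - B) Y = ad A Y - ad B Y.
Proof. by rewrite adDl adNl. Qed.
Lemma adBr (A B Y : mat) : ad Y (A - B) = ad Y A - ad Y B.
Proof. by rewrite adDr adNr. Qed.
Lemma adZr (c : R) (A Y : mat) : ad Y (c *: A) = c *: ad Y A.
Proof. by rewrite /ad -scalemxAr -scalemxAl scalerBr. Qed.
Lemma adZl (c : R) (A Y : mat) : ad (c *: A) Y = c *: ad A Y.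
Proof. by rewrite /ad -scalemxAr -scalemxAl scalerBr. Qed.
Lemma ad0r (Y : mat) : ad Y 0 = 0.
Proof. by rewrite /ad mulmx0 mul0mx subrr. Qed.
Lemma ad_sum (Y : mat) I (r : seq I) (P : pred I) (F : I -> mat) :
  ad Y (\sum_(k <- r | P k) F k) = \sum_(k <- r | P k) ad Y (F k).
Proof. by rewrite /ad mulmx_sumr mulmx_suml -sumrB. Qed.
Lemma ad_lin (Y A : mat) :
  ad Y A = \sum_(q : 'I_N * 'I_N) A q.1 q.2 *: ad Y (delta_mx q.1 q.2).
Proof.
rewrite {1}(matrix_sum_delta A) pair_bigA /= /ad mulmx_sumr mulmx_suml -sumrB.
by apply: eq_bigr => q _; rewrite -scalemxAr -scalemxAl scalerBr.
Qed.

Notation tens := (@tens R n).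
Notation tpure := (@tpure R n).
Notation tmapl := (@tmapl R n).
Notation tmapr := (@tmapr R n).
Notation tact := (@tact R n).

Lemma tmaplD f (T1 T2 : tens) : tmapl f (T1 + T2) = tmapl f T1 + tmapl f T2.
Proof.
apply/ffunP => p; rewrite !ffunE -big_split /=; apply: eq_bigr => q _.
by rewrite ffunE scalerDr.
Qed.
Lemma tmaplZ f c (T : tens) : tmapl f (c *: T) = c *: tmapl f T.
Proof.
apply/ffunP => p; rewrite !ffunE scaler_sumr; apply: eq_bigr => q _.
by rewrite ffunE !scalerA mulrC.
Qed.
Lemma tmapl0 f : tmapl f 0 = 0.
Proof. by apply/ffunP => p; rewrite !ffunE big1 // => q _; rewrite ffunE scaler0. Qed.
Lemma tmapl_sum f I (r : seq I) (P : pred I) (F : I -> tens) :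
  tmapl f (\sum_(k <- r | P k) F k) = \sum_(k <- r | P k) tmapl f (F k).
Proof. exact: (big_morph (tmapl f) (tmaplD f) (tmapl0 f)). Qed.

Lemma tmapl_pure f (A B : mat) :
  (forall Y : mat, f Y = \sum_(q : 'I_N * 'I_N) Y q.1 q.2 *: f (delta_mx q.1 q.2)) ->
  tmapl f (tpure A B) = tpure (f A) B.
Proof.
move=> hf; apply/ffunP => p; rewrite !ffunE (hf A) summxE scaler_suml.
by apply: eq_bigr => q _; rewrite !ffunE mxE scalerA mulrC.
Qed.

Lemma tmaprD X (T1 T2 : tens) : tmapr (ad X) (T1 + T2) = tmapr (ad X) T1 + tmapr (ad X) T2.
Proof. by apply/ffunP => p; rewrite !ffunE adDr. Qed.
Lemma tmaprZ X c (T : tens) : tmapr (ad X) (c *: T) = c *: tmapr (ad X) T.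
Proof. by apply/ffunP => p; rewrite !ffunE adZr. Qed.
Lemma tmapr0 X : tmapr (ad X) 0 = 0.
Proof. by apply/ffunP => p; rewrite !ffunE ad0r. Qed.
Lemma tmapr_pure X (A B : mat) : tmapr (ad X) (tpure A B) = tpure A (ad X B).
Proof. by apply/ffunP => p; rewrite !ffunE adZr. Qed.

Lemma tactD X (T1 T2 : tens) : tact X (T1 + T2) = tact X T1 + tact X T2.
Proof. by rewrite /tact tmaplD tmaprD addrACA. Qed.
Lemma tactZ X c (T : tens) : tact X (c *: T) = c *: tact X T.
Proof. by rewrite /tact tmaplZ tmaprZ scalerDr. Qed.
Lemma tact0 X : tact X 0 = 0.
Proof. by rewrite /tact tmapl0 tmapr0 addr0. Qed.
Lemma tactN X (T : tens) : tact X (- T) = - tact X T.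
Proof. by rewrite -scaleN1r tactZ scaleN1r. Qed.
Lemma tactB X (T1 T2 : tens) : tact X (T1 - T2) = tact X T1 - tact X T2.
Proof. by rewrite tactD tactN. Qed.
Lemma tact_sum X I (r : seq I) (P : pred I) (F : I -> tens) :
  tact X (\sum_(k <- r | P k) F k) = \sum_(k <- r | P k) tact X (F k).
Proof. exact: (big_morph (tact X) (tactD X) (tact0 X)). Qed.
Lemma tact_pure X (A B : mat) : tact X (tpure A B) = tpure (ad X A) B + tpure A (ad X B).
Proof. by rewrite /tact tmapr_pure (tmapl_pure _ _ (ad_lin X)). Qed.

Lemma tpureDl (A1 A2 B : mat) : tpure (A1 + A2) B = tpure A1 B + tpure A2 B.
Proof. by apply/ffunP => p; rewrite !ffunE mxE scalerDl. Qed.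
Lemma tpureDr (A B1 B2 : mat) : tpure A (B1 + B2) = tpure A B1 + tpure A B2.
Proof. by apply/ffunP => p; rewrite !ffunE scalerDr. Qed.
Lemma tpureZl c (A B : mat) : tpure (c *: A) B = c *: tpure A B.
Proof. by apply/ffunP => p; rewrite !ffunE mxE scalerA. Qed.
Lemma tpureZr c (A B : mat) : tpure A (c *: B) = c *: tpure A B.
Proof. by apply/ffunP => p; rewrite !ffunE !scalerA mulrC. Qed.
Lemma tpureNl (A B : mat) : tpure (- A) B = - tpure A B.
Proof. by rewrite -scaleN1r tpureZl scaleN1r. Qed.
Lemma tpureNr (A B : mat) : tpure A (- B) = - tpure A B.
Proof. by rewrite -scaleN1r tpureZr scaleN1r. Qed.
Lemma tpureBl (A1 A2 B : mat) : tpure (A1 - A2) B = tpure A1 B - tpure A2 B.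
Proof. by rewrite tpureDl tpureNl. Qed.
Lemma tpureBr (A B1 B2 : mat) : tpure A (B1 - B2) = tpure A B1 - tpure A B2.
Proof. by rewrite tpureDr tpureNr. Qed.
Lemma tpure0l (B : mat) : tpure 0 B = 0.
Proof. by apply/ffunP => p; rewrite !ffunE mxE scale0r. Qed.
Lemma tpure0r (A : mat) : tpure A 0 = 0.
Proof. by apply/ffunP => p; rewrite !ffunE scaler0. Qed.
End S.

Section S2.
Variable R : numClosedFieldType.
Variables n i : nat.
Hypothesis Hn : (3 <= n)%N.
Hypothesis Hi : (2 <= i <= n.-1)%N.
Notation N := (n + n)%N.
Notation mat := 'M[R]_N.
Notation E := (@E R n).
Notation hat := (hat n).
Notation m := i.+1.
Notation Xplus := (@Xplus R n).
Notation Xminus := (@Xminus R n).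
Notation Xnegtwo := (@Xnegtwo R n).
Notation Xnegplus := (@Xnegplus R n).
Notation Xtwo := (@Xtwo R n).
Notation Xm := (Xplus 1 m + Xminus 2 m).

Ltac mxring_B := apply/matrixP => ? ?; rewrite !mxE; ring.

Lemma adX_E a b : (0 < a <= N)%N -> (0 < b <= N)%N -> ad Xm (E a b) =
  (hat m == a)%:R *: E 1 b + (hat 1 == a)%:R *: E m b + (m == a)%:R *: E 2 b
  - (hat 2 == a)%:R *: E (hat m) b - (b == 1)%:R *: E a (hat m)
  - (b == m)%:R *: E a (hat 1) - (b == 2)%:R *: E a m + (b == hat m)%:R *: E a (hat 2).
Proof.
move=> Ha Hb.
rewrite /Xplus /Xminus !(adDl, adBl, adNl) !ad_EE.
bsimp. rewrite ?andbT.
mxring_B.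
Qed.

Lemma natrF : false%:R = 0 :> R. Proof. by []. Qed.
Lemma natrT : true%:R = 1 :> R. Proof. by []. Qed.
Ltac clean_B := rewrite ?natrF ?natrT ?scale0r ?scale1r ?addr0 ?add0r ?subr0 ?sub0r.
Ltac adstep0_B := rewrite !adX_E; try (rewrite /hat; lia); bsimp; clean_B.
Ltac adstep_B := rewrite ?(adDr, adBr, adNr, adZr, ad0r); adstep0_B.
Notation f := (fun Y => ad Xm (ad Xm Y)).

Lemma fD (A B : mat) : f (A + B) = f A + f B.
Proof. by cbv beta; rewrite (adDr A B Xm) adDr. Qed.

Lemma I1 : f (Xnegtwo 1) = Xminus 2 1 - 2 *: E m (hat m).
Proof. cbv beta; rewrite /Xnegtwo. adstep0_B. adstep_B. rewrite /Xminus. mxring_B. Qed.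
Lemma I2 : f (Xnegtwo 2) = - Xminus 1 2 + 2 *: E (hat m) m.
Proof. cbv beta; rewrite /Xnegtwo. adstep0_B. adstep_B. rewrite /Xminus. mxring_B. Qed.
Lemma I3 j : (3 <= j <= i)%N -> f (Xnegtwo j) = 0.
Proof. move=> Hj. cbv beta; rewrite /Xnegtwo. adstep0_B. by rewrite oppr0 ad0r. Qed.
Lemma I4 : f (Xnegplus 1 2) = Xminus 2 2 - Xminus 1 1 - 2 *: Xminus m m.
Proof. rewrite /Xnegplus fD; cbv beta. adstep0_B. adstep_B. rewrite /Xminus. mxring_B. Qed.
Lemma I5 k : (3 <= k <= i)%N -> f (Xnegplus 1 k) = Xminus 2 k.
Proof. move=> Hk. rewrite /Xnegplus fD; cbv beta. adstep0_B. adstep_B. rewrite /Xminus. mxring_B. Qed.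
Lemma I6 k : (3 <= k <= i)%N -> f (Xnegplus 2 k) = - Xminus 1 k.
Proof. move=> Hk. rewrite /Xnegplus fD; cbv beta. adstep0_B. adstep_B. rewrite /Xminus. mxring_B. Qed.
Lemma I7 j k : (3 <= j)%N -> (j < k <= i)%N -> f (Xnegplus j k) = 0.
Proof. move=> Hj Hk. rewrite /Xnegplus fD; cbv beta. adstep0_B. by rewrite ?oppr0 ?ad0r ?addr0. Qed.
End S2.

Section S3.
Variable R : numClosedFieldType.
Variables n i : nat.
Hypothesis Hn : (3 <= n)%N.
Hypothesis Hi : (2 <= i <= n.-1)%N.
Variable c0 : R.
Hypothesis Hc0 : c0 != 0.
Notation N := (n + n)%N.
Notation mat := 'M[R]_N.
Notation E := (@E R n).
Notation hat := (hat n).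
Notation m := i.+1.
Notation Xplus := (@Xplus R n).
Notation Xminus := (@Xminus R n).
Notation Xnegtwo := (@Xnegtwo R n).
Notation Xnegplus := (@Xnegplus R n).
Notation Xtwo := (@Xtwo R n).
Notation Xm := (Xplus 1 m + Xminus 2 m).
Notation tpure := (@tpure R n).
Notation tmapl := (@tmapl R n).
Notation tens := (@tens R n).
Notation f := (fun Y => ad Xm (ad Xm Y)).

Definition Tst : tens := (4 * c0)^-1 *: \sum_(1 <= k < i.+1)
   (tpure (Xminus 2 k) (Xplus 1 k) - tpure (Xminus 1 k) (Xplus 2 k)).
Definition Dst : tens := (4 * c0)^-1 *: (tpure (-2 *: Xminus m m) (Xplus 1 2)
   - tpure (2 *: E m (hat m)) (Xplus 1 1) + tpure (2 *: E (hat m) m) (Xplus 2 2)).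

Lemma f_lin (Y : mat) : f Y = \sum_(q : 'I_N * 'I_N) Y q.1 q.2 *: f (delta_mx q.1 q.2).
Proof.
cbv beta; rewrite {1}(ad_lin Xm Y) ad_sum; apply: eq_bigr => q _; by rewrite adZr.
Qed.

Lemma Xplus11 : Xplus 1 1 = 2 *: Xtwo 1.
Proof. by rewrite /Xplus /Xtwo scaler_nat mulr2n. Qed.
Lemma Xplus22 : Xplus 2 2 = 2 *: Xtwo 2.
Proof. by rewrite /Xplus /Xtwo scaler_nat mulr2n. Qed.
Lemma Xplus21 : Xplus 2 1 = Xplus 1 2.
Proof. by rewrite /Xplus addrC. Qed.

Lemma tau2_dec : @tau2 R n i c0 Xm = Tst + Dst.
Proof.
have Hpure := fun A B => tmapl_pure A B f_lin.
rewrite /tau2 /omega tmaplD !tmaplZ !(@tmapl_sum _ _ f).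
have -> : \sum_(1 <= k < m) tmapl f (tpure (Xnegtwo k) (Xtwo k)) =
   \sum_(1 <= k < m) tpure (f (Xnegtwo k)) (Xtwo k).
  by apply: eq_bigr => k _; rewrite Hpure.
have -> : \sum_(1 <= k < m) tmapl f (\sum_(k.+1 <= k0 < m) tpure (Xnegplus k k0) (Xplus k k0)) =
   \sum_(1 <= k < m) \sum_(k.+1 <= k0 < m) tpure (f (Xnegplus k k0)) (Xplus k k0).
  by apply: eq_bigr => k _; rewrite (@tmapl_sum _ _ f); apply: eq_bigr => k0 _; rewrite Hpure.
have -> : \sum_(1 <= k < m) tpure (f (Xnegtwo k)) (Xtwo k) =
    tpure (f (Xnegtwo 1)) (Xtwo 1) + tpure (f (Xnegtwo 2)) (Xtwo 2).
  rewrite big_ltn; last by lia.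
  rewrite big_ltn; last by lia.
  rewrite addrA big_nat_cond big1 ?addr0 // => k /andP [/andP [Hk1 Hk2] _].
  by rewrite (I3 _ Hn Hi) ?tpure0l //; lia.
have -> : \sum_(1 <= k < m) \sum_(k.+1 <= k0 < m) tpure (f (Xnegplus k k0)) (Xplus k k0) =
   tpure (Xminus 2 2 - Xminus 1 1 - 2 *: Xminus m m) (Xplus 1 2)
   + \sum_(3 <= k < m) tpure (Xminus 2 k) (Xplus 1 k)
   - \sum_(3 <= k < m) tpure (Xminus 1 k) (Xplus 2 k).
  rewrite big_ltn; last by lia.
  rewrite big_ltn; last by lia.
  rewrite [X in X + _]big_ltn; last by lia.
  rewrite (I4 _ Hn Hi).
  rewrite [X in _ + (_ + X)]big_nat_cond [X in _ + (_ + X)]big1 ?addr0; last first.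
    move=> j /andP [/andP [Hj1 Hj2] _].
    rewrite big_nat_cond big1 // => k /andP [/andP [Hk1 Hk2] _].
    by rewrite (I7 _ Hn Hi) ?tpure0l //; lia.
  have e1 : \sum_(3 <= k < m) tpure (ad Xm (ad Xm (Xnegplus 1 k))) (Xplus 1 k)
          = \sum_(3 <= k < m) tpure (Xminus 2 k) (Xplus 1 k).
    by apply: eq_big_nat => k Hk; rewrite (I5 _ Hn Hi) //; lia.
  have e2 : \sum_(3 <= k < m) tpure (ad Xm (ad Xm (Xnegplus 2 k))) (Xplus 2 k)
          = - \sum_(3 <= k < m) tpure (Xminus 1 k) (Xplus 2 k).
    by rewrite -sumrN; apply: eq_big_nat => k Hk; rewrite (I6 _ Hn Hi) ?tpureNl //; lia.
  by rewrite e1 e2 ?addrA.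
rewrite (I1 _ Hn Hi) (I2 _ Hn Hi).
rewrite /Tst /Dst (@big_ltn _ _ _ 1 m); last by lia.
rewrite (@big_ltn _ _ _ 2 m); last by lia.
rewrite sumrB Xplus21 Xplus11 Xplus22.
rewrite !(tpureDl, tpureBl, tpureNl, tpureZl, tpureZr).
apply/ffunP => p; apply/matrixP => r c.
rewrite !(ffunE, mxE, sum_ffunE, summxE).
field. exact: Hc0.

Qed.
End S3.

Lemma sum_nat_if (V : nmodType) lo hi b (F : nat -> V) : (lo <= b < hi)%N ->
  \sum_(lo <= j < hi) (if b == j then F j else 0) = F b.
Proof.
move=> Hb; rewrite (bigD1_seq b) ?mem_index_iota ?iota_uniq //= eqxx.
by rewrite big1 ?addr0 // => j; rewrite eq_sym => /negbTE ->.
Qed.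

Lemma scale_if (R : pzRingType) (V : lmodType R) (b : bool) (X : V) :
  b%:R *: X = if b then X else 0.
Proof. by case: b; rewrite ?scale1r ?scale0r. Qed.

Section S4.
Variable R : numClosedFieldType.
Variables n i : nat.
Hypothesis Hn : (3 <= n)%N.
Hypothesis Hi : (2 <= i <= n.-1)%N.
Notation N := (n + n)%N.
Notation mat := 'M[R]_N.
Notation E := (@E R n).
Notation hat := (hat n).
Notation m := i.+1.
Notation Xplus := (@Xplus R n).
Notation Xminus := (@Xminus R n).
Notation Xnegplus := (@Xnegplus R n).
Notation Jmx := (@Jmx R n).
Notation in_sp := (@in_sp R n).

Lemma trE a b : (E a b)^T = E b a.
Proof. by apply/matrixP => r c; rewrite !mxE andbC. Qed.

Lemma collapse (F : nat -> mat) (P : nat -> bool) x : (1 <= x <= n)%N ->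
  (forall j, (1 <= j <= n)%N -> P j = (x == j)) ->
  \sum_(1 <= j < n.+1) (P j)%:R *: F j = F x.
Proof.
move=> Hx HP; rewrite (eq_big_nat _ _ (F2 := fun j => if x == j then F j else 0)).
  by rewrite sum_nat_if //; lia.
by move=> j Hj; rewrite HP ?scale_if //; lia.
Qed.
Lemma collapse0 (F : nat -> mat) (P : nat -> bool) :
  (forall j, (1 <= j <= n)%N -> P j = false) ->
  \sum_(1 <= j < n.+1) (P j)%:R *: F j = 0.
Proof.
move=> HP; rewrite big_nat_cond big1 // => j /andP [Hj _]; rewrite HP ?scale0r //; lia.
Qed.
Ltac coll0_D := rewrite collapse0; last (move=> ? ?; rewrite /hat; lia).
Ltac coll_D x := rewrite (@collapse _ _ x); [ | lia | move=> ? ?; rewrite /hat; lia].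

Lemma EJ2 a b : (1 <= b <= n)%N -> E a (hat b) *m Jmx = - E a b.
Proof.
move=> Hb; rewrite /Jmx mulmx_sumr.
under eq_bigr => j _ do rewrite mulmxBr !mulE.
by rewrite sumrB; coll0_D; coll_D b; rewrite sub0r.
Qed.
Lemma JE1 a b : (1 <= a <= n)%N -> Jmx *m E a b = - E (hat a) b.
Proof.
move=> Ha; rewrite /Jmx mulmx_suml.
under eq_bigr => j _ do rewrite mulmxBl !mulE.
by rewrite sumrB; coll0_D; coll_D a; rewrite sub0r.
Qed.
Lemma JE2 a b : (1 <= a <= n)%N -> Jmx *m E (hat a) b = E a b.
Proof.
move=> Ha; rewrite /Jmx mulmx_suml.
under eq_bigr => j _ do rewrite mulmxBl !mulE.
by rewrite sumrB; coll_D a; coll0_D; rewrite subr0.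
Qed.

Lemma EJ1 a b : (1 <= b <= n)%N -> E a b *m Jmx = E a (hat b).
Proof.
move=> Hb; rewrite /Jmx mulmx_sumr.
under eq_bigr => j _ do rewrite mulmxBr !mulE.
rewrite sumrB.
rewrite [X in _ - X]big_nat_cond [X in _ - X]big1; last first.
  move=> j /andP [Hj _]; have -> : (b == hat j) = false by apply/negbTE/eqP; rewrite /hat; lia.
  by rewrite scale0r.
rewrite subr0 (eq_big_nat _ _ (F2 := fun j => if b == j then E a (hat j) else 0)).
  by rewrite sum_nat_if //; lia.
move=> j Hj; rewrite scale_if; case: eqP => [<-|] //=.
by rewrite (_ : (0 < b <= N)%N) //; lia.
Qed.

Ltac mxring_D := apply/matrixP => ? ?; rewrite !mxE; ring.
Ltac Jsimp_D := rewrite ?(EJ2, JE2); try lia; rewrite ?(EJ1, JE1); try lia.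

Lemma sp_Xplus j k : (1 <= j <= n)%N -> (1 <= k <= n)%N -> in_sp (Xplus j k).
Proof.
move=> Hj Hk; rewrite /in_sp /Xplus raddfD /= !trE mulmxDl mulmxDr.
Jsimp_D. mxring_D.
Qed.
Lemma sp_Xminus j k : (1 <= j <= n)%N -> (1 <= k <= n)%N -> in_sp (Xminus j k).
Proof.
move=> Hj Hk; rewrite /in_sp /Xminus raddfB /= !trE mulmxBl mulmxBr.
Jsimp_D. mxring_D.
Qed.
Lemma sp_Ehat j : (1 <= j <= n)%N -> in_sp (E j (hat j)).
Proof. move=> Hj; rewrite /in_sp !trE. Jsimp_D. mxring_D. Qed.
Lemma sp_hatE j : (1 <= j <= n)%N -> in_sp (E (hat j) j).
Proof. move=> Hj; rewrite /in_sp !trE. Jsimp_D. mxring_D. Qed.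

Lemma sp0 : in_sp 0.
Proof. by rewrite /in_sp trmx0 mul0mx mulmx0 addr0. Qed.
Lemma spZD c A B : in_sp A -> in_sp B -> in_sp (c *: A + B).
Proof.
rewrite /in_sp => HA HB; rewrite raddfD /=.
have -> : (c *: A)^T = c *: A^T by apply/matrixP => r s; rewrite !mxE.
rewrite mulmxDl mulmxDr -scalemxAl -scalemxAr.
by rewrite addrACA -scalerDr HA HB scaler0 addr0.
Qed.

Lemma collapseG (V : lmodType R) lo hi (F : nat -> V) (P : nat -> bool) x : (lo <= x < hi)%N ->
  (forall j, (lo <= j < hi)%N -> P j = (x == j)) ->
  \sum_(lo <= j < hi) (P j)%:R *: F j = F x.
Proof.
move=> Hx HP; rewrite (eq_big_nat _ _ (F2 := fun j => if x == j then F j else 0)).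
  by rewrite sum_nat_if.
by move=> j Hj; rewrite HP ?scale_if.
Qed.
Lemma collapse0G (V : lmodType R) lo hi (F : nat -> V) (P : nat -> bool) :
  (forall j, (lo <= j < hi)%N -> P j = false) ->
  \sum_(lo <= j < hi) (P j)%:R *: F j = 0.
Proof.
move=> HP; rewrite big_nat_cond big1 // => j /andP [Hj _]; rewrite HP ?scale0r //.
Qed.

Definition lg (a : nat -> nat -> R) : mat :=
  \sum_(1 <= x < i.+1) \sum_(1 <= y < i.+1) a x y *: Xminus x y.
Definition ind j k := fun x y : nat => ((x == j) && (y == k))%:R : R.

Lemma lg_ind j k : (1 <= j <= i)%N -> (1 <= k <= i)%N -> lg (ind j k) = Xminus j k.
Proof.
move=> Hj Hk; rewrite /lg /ind.
rewrite (eq_big_nat _ _ (F2 := fun x => (x == j)%:R *: Xminus x k)).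
  by rewrite (@collapseG _ _ _ _ _ j) //; try (move=> ? ?); lia.
move=> x Hx; case: eqP => [->|Hxj] /=.
  by rewrite scale1r (@collapseG _ _ _ _ _ k) //; try (move=> ? ?); lia.
by rewrite scale0r big1 // => ? _; rewrite scale0r.
Qed.

Lemma lgB a1 a2 : lg (fun x y => a1 x y - a2 x y) = lg a1 - lg a2.
Proof.
rewrite /lg -sumrB; apply: eq_bigr => x _; rewrite -sumrB; apply: eq_bigr => y _.
by rewrite scalerBl.
Qed.

Lemma tr_ind j k : (1 <= j <= i)%N ->
  \sum_(1 <= x < i.+1) ind j k x x = (j == k)%:R.
Proof.
move=> Hj; rewrite /ind (eq_big_nat _ _ (F2 := fun x => if j == x then (j == k)%:R else 0)).
  by rewrite sum_nat_if //; lia.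
by move=> x Hx; case: (eqVneq j x) => [<-|H] /=; rewrite ?eqxx //; rewrite eq_sym (negbTE H).
Qed.

Lemma lg_mem a : \sum_(1 <= x < i.+1) a x x = 0 -> @in_lgamma R n i (lg a).
Proof. by move=> H; exists a. Qed.

Lemma lg_Xminus j k : (1 <= j <= i)%N -> (1 <= k <= i)%N -> j != k ->
  @in_lgamma R n i (Xminus j k).
Proof.
move=> Hj Hk Hjk; rewrite -lg_ind //; apply: lg_mem; rewrite tr_ind //.
by rewrite (negbTE Hjk).
Qed.

Lemma lg_H12 : @in_lgamma R n i (Xminus 2 2 - Xminus 1 1).
Proof.
rewrite -!lg_ind; try lia. rewrite -lgB; apply: lg_mem.
rewrite sumrB !tr_ind; try lia. by rewrite !eqxx subrr.
Qed.
End S4.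

Section S5.
Variable R : numClosedFieldType.
Variables n i : nat.
Notation N := (n + n)%N.
Notation mat := 'M[R]_N.
Notation E := (@E R n).
Notation hat := (hat n).
Notation tens := (@tens R n).
Notation tpure := (@tpure R n).
Notation in_sp := (@in_sp R n).

Definition subsp (U : mat -> Prop) := U 0 /\ forall c A B, U A -> U B -> U (c *: A + B).
Definition supp (P : nat -> nat -> bool) (Y : mat) := forall r c : 'I_N, ~~ P r.+1 c.+1 -> Y r c = 0.

Lemma supp_ZD P c A B : supp P A -> supp P B -> supp P (c *: A + B).
Proof. by move=> HA HB r s H; rewrite !mxE HA // HB // mulr0 addr0. Qed.
Lemma supp0 P : supp P 0.
Proof. by move=> r s _; rewrite mxE. Qed.
Lemma supp_E (P : nat -> nat -> bool) a b : P a b -> supp P (E a b).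
Proof.
move=> Hab r s H; rewrite mxE; case: eqP => [Ha|] //=; case: eqP => [Hb|] //=.
by move: H; rewrite Ha Hb Hab.
Qed.

Lemma subsp_D U A B : subsp U -> U A -> U B -> U (A + B).
Proof. by move=> [_ H] HA HB; rewrite -[A]scale1r; apply: H. Qed.
Lemma subsp_Z U c A : subsp U -> U A -> U (c *: A).
Proof. by move=> [H0 H] HA; rewrite -[c *: A]addr0; apply: H. Qed.
Lemma subsp_N U A : subsp U -> U A -> U (- A).
Proof. by move=> HU HA; rewrite -scaleN1r; apply: subsp_Z. Qed.
Lemma subsp_B U A B : subsp U -> U A -> U B -> U (A - B).
Proof. by move=> HU HA HB; apply: subsp_D => //; apply: subsp_N. Qed.
Lemma subsp_sum U I (r : seq I) (P : pred I) (F : I -> mat) : subsp U ->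
  (forall k, P k -> U (F k)) -> U (\sum_(k <- r | P k) F k).
Proof.
move=> HU HF; apply: (big_ind U) => //; first by case: HU.
by move=> A B; apply: subsp_D.
Qed.

Definition Pzn (a b : nat) := ((1 <= a <= i) && (n + 1 <= b <= n + i))%N.
Definition Pout (a b : nat) := (@outer_idx n i a && @outer_idx n i b).

Lemma subsp_zn : subsp (@in_zn R n i).
Proof.
split; first by split; [exact: sp0 | exact: (@supp0 Pzn)].
move=> c A B [HA1 HA2] [HB1 HB2]; split; first exact: spZD.
exact: (@supp_ZD Pzn).
Qed.
Lemma subsp_lngamma : subsp (@in_lngamma R n i).
Proof.
split; first by split; [exact: sp0 | exact: (@supp0 Pout)].
move=> c A B [HA1 HA2] [HB1 HB2]; split; first exact: spZD.
exact: (@supp_ZD Pout).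
Qed.
Lemma subsp_lgamma : subsp (@in_lgamma R n i).
Proof.
split.
  exists (fun _ _ => 0); split; first by rewrite big1.
  by rewrite big1 // => x _; rewrite big1 // => y _; rewrite scale0r.
move=> c A B [a1 [Ha1 ->]] [a2 [Ha2 ->]].
exists (fun x y => c * a1 x y + a2 x y); split.
  by rewrite big_split /= -mulr_sumr Ha1 Ha2 mulr0 addr0.
rewrite scaler_sumr -big_split; apply: eq_bigr => x _.
rewrite scaler_sumr -big_split; apply: eq_bigr => y _.
by rewrite scalerDl scalerA.
Qed.
Lemma subsp_zlpl : subsp (@in_zl_plus_lngamma R n i).
Proof.
split.
  exists 0, 0; split; first by exists 0; rewrite scale0r.
  by split; [case: subsp_lngamma | rewrite addr0].
move=> c A B [Y1 [Y2 [[c1 HY1] [HY2 ->]]]] [Z1 [Z2 [[d1 HZ1] [HZ2 ->]]]].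
exists (c *: Y1 + Z1), (c *: Y2 + Z2); split.
  by exists (c * c1 + d1); rewrite HY1 HZ1 scalerA scalerDl.
split; first by case: subsp_lngamma => _; apply.
by rewrite scalerDr addrACA.
Qed.

Lemma tens_ZD U W c (T1 T2 : tens) : subsp U -> subsp W ->
  tens_in U W T1 -> tens_in U W T2 -> tens_in U W (c *: T1 + T2).
Proof.
move=> HU HW [H1a H1b] [H2a H2b]; split.
  by move=> p; rewrite !ffunE; case: HW => _; apply.
move=> r s.
have -> : \matrix_(a, b) (c *: T1 + T2) (a, b) r s =
  c *: \matrix_(a, b) T1 (a, b) r s + \matrix_(a, b) T2 (a, b) r s.
  by apply/matrixP => a b; rewrite !mxE !ffunE !mxE.
by case: HU => _; apply.
Qed.
Lemma tens_0 U W : subsp U -> subsp W -> tens_in U W 0.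
Proof.
move=> [HU _] [HW _]; split; first by move=> p; rewrite ffunE.
move=> r s; have -> : \matrix_(a, b) (0 : tens) (a, b) r s = 0.
  by apply/matrixP => a b; rewrite !mxE ffunE mxE.
done.
Qed.
Lemma tens_pure U W A B : subsp U -> subsp W -> U A -> W B -> tens_in U W (tpure A B).
Proof.
move=> HU HW HA HB; split; first by move=> p; rewrite ffunE; apply: subsp_Z.
move=> r s; have -> : \matrix_(a, b) tpure A B (a, b) r s = B r s *: A.
  by apply/matrixP => a b; rewrite !mxE ffunE mxE mulrC.
exact: subsp_Z.
Qed.
Lemma tens_D U W (T1 T2 : tens) : subsp U -> subsp W ->
  tens_in U W T1 -> tens_in U W T2 -> tens_in U W (T1 + T2).
Proof. by move=> *; rewrite -[T1]scale1r; apply: tens_ZD. Qed.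
Lemma tens_Z U W c (T : tens) : subsp U -> subsp W -> tens_in U W T -> tens_in U W (c *: T).
Proof. by move=> *; rewrite -[c *: T]addr0; apply: tens_ZD => //; apply: tens_0. Qed.
Lemma tens_B U W (T1 T2 : tens) : subsp U -> subsp W ->
  tens_in U W T1 -> tens_in U W T2 -> tens_in U W (T1 - T2).
Proof. by move=> *; rewrite -scaleN1r; apply: tens_D => //; apply: tens_Z. Qed.
Lemma tens_sum U W I (r : seq I) (P : pred I) (F : I -> tens) : subsp U -> subsp W ->
  (forall k, P k -> tens_in U W (F k)) -> tens_in U W (\sum_(k <- r | P k) F k).
Proof.
move=> HU HW HF; apply: (big_ind (tens_in U W)) => //; first exact: tens_0.
by move=> A B; apply: tens_D.
Qed.
End S5.

Section S6.
Variable R : numClosedFieldType.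
Variables n i : nat.
Hypothesis Hn : (3 <= n)%N.
Hypothesis Hi : (2 <= i <= n.-1)%N.
Variable c0 : R.
Hypothesis Hc0 : c0 != 0.
Notation N := (n + n)%N.
Notation mat := 'M[R]_N.
Notation E := (@E R n).
Notation hat := (hat n).
Notation m := i.+1.
Notation Xplus := (@Xplus R n).
Notation Xminus := (@Xminus R n).
Notation Xm := (Xplus 1 m + Xminus 2 m).
Notation tpure := (@tpure R n).
Notation tens := (@tens R n).
Notation Tst := (@Tst R n i c0).
Notation Dst := (@Dst R n i c0).
Notation in_zn := (@in_zn R n i).
Notation in_lgamma := (@in_lgamma R n i).
Notation in_lngamma := (@in_lngamma R n i).
Notation in_zlpl := (@in_zl_plus_lngamma R n i).

Lemma zn_Xplus j k : (1 <= j <= i)%N -> (1 <= k <= i)%N -> in_zn (Xplus j k).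
Proof.
move=> Hj Hk; split; first by apply: (sp_Xplus _ Hn Hi); lia.
rewrite /Xplus -[E j (hat k)]scale1r.
apply: (@supp_ZD _ _ (@Pzn n i)); apply: supp_E; rewrite /Pzn /hat; lia.
Qed.

Lemma lng_Hm : in_lngamma (Xminus m m).
Proof.
split; first by apply: (sp_Xminus _ Hn Hi); lia.
rewrite /Xminus -scaleN1r addrC.
apply: (@supp_ZD _ _ (@Pout n i)); apply: supp_E; rewrite /Pout /outer_idx /hat; lia.
Qed.
Lemma lng_E1 : in_lngamma (E m (hat m)).
Proof.
split; first by apply: (sp_Ehat _ Hn Hi); lia.
apply: (@supp_E _ _ (@Pout n i)); rewrite /Pout /outer_idx /hat; lia.
Qed.
Lemma lng_E2 : in_lngamma (E (hat m) m).
Proof.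
split; first by apply: (sp_hatE _ Hn Hi); lia.
apply: (@supp_E _ _ (@Pout n i)); rewrite /Pout /outer_idx /hat; lia.
Qed.
Lemma zlpl_of Y : in_lngamma Y -> in_zlpl Y.
Proof. move=> HY; exists 0, Y; split; last by rewrite add0r. by exists 0; rewrite scale0r. Qed.

Lemma Tst_alt : Tst = (4 * c0)^-1 *: (tpure (Xminus 2 1) (Xplus 1 1) - tpure (Xminus 1 2) (Xplus 2 2)
   + tpure (Xminus 2 2 - Xminus 1 1) (Xplus 1 2)
   + \sum_(3 <= k < m) (tpure (Xminus 2 k) (Xplus 1 k) - tpure (Xminus 1 k) (Xplus 2 k))).
Proof.
rewrite /Tst (@big_ltn _ _ _ 1 m); last by lia.
rewrite (@big_ltn _ _ _ 2 m); last by lia.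
rewrite Xplus21 tpureBl.
apply/ffunP => p; apply/matrixP => r c.
rewrite !(ffunE, mxE).
ring.
Qed.

Lemma Tst_in : tens_in in_lgamma in_zn Tst.
Proof.
have HU := subsp_lgamma R n i; have HW := subsp_zn R n i.
rewrite Tst_alt; apply: tens_Z => //.
apply: tens_D => //; first (apply: tens_D => //; first apply: tens_B => //).
- apply: tens_pure => //; [apply: lg_Xminus | apply: zn_Xplus]; lia.
- apply: tens_pure => //; [apply: lg_Xminus | apply: zn_Xplus]; lia.
- apply: tens_pure => //; [apply: lg_H12 | apply: zn_Xplus]; lia.
- rewrite big_nat_cond; apply: tens_sum => // k /andP [Hk _].
  apply: tens_B => //; apply: tens_pure => //; [apply: lg_Xminus | apply: zn_Xplus | apply: lg_Xminus | apply: zn_Xplus]; lia.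
Qed.

Lemma Dst_in : tens_in in_zlpl in_zn Dst.
Proof.
have HU := subsp_zlpl R n i; have HW := subsp_zn R n i.
rewrite /Dst; apply: tens_Z => //.
apply: tens_D => //; first (apply: tens_B => //).
- apply: tens_pure => //; last by apply: zn_Xplus; lia.
  by apply: zlpl_of; apply: subsp_Z => //; [apply: subsp_lngamma | apply: lng_Hm].
- apply: tens_pure => //; last by apply: zn_Xplus; lia.
  by apply: zlpl_of; apply: subsp_Z => //; [apply: subsp_lngamma | apply: lng_E1].
- apply: tens_pure => //; last by apply: zn_Xplus; lia.
  by apply: zlpl_of; apply: subsp_Z => //; [apply: subsp_lngamma | apply: lng_E2].
Qed.

Lemma pr_exists : @is_pr_lgamma_zn R n i (@tau2 R n i c0 Xm) Tst.
Proof.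
split; first exact: Tst_in.
by rewrite (tau2_dec Hn Hi Hc0) addrC addKr; exact: Dst_in.
Qed.
End S6.

Section S7.
Variable R : numClosedFieldType.
Variables n i : nat.
Hypothesis Hn : (3 <= n)%N.
Hypothesis Hi : (2 <= i <= n.-1)%N.
Variable c0 : R.
Hypothesis Hc0 : c0 != 0.
Notation N := (n + n)%N.
Notation mat := 'M[R]_N.
Notation E := (@E R n).
Notation hat := (hat n).
Notation m := i.+1.
Notation Xplus := (@Xplus R n).
Notation Xminus := (@Xminus R n).
Notation Xm := (Xplus 1 m + Xminus 2 m).
Notation tens := (@tens R n).
Notation Tst := (@Tst R n i c0).
Notation Dst := (@Dst R n i c0).
Notation in_zn := (@in_zn R n i).
Notation in_lgamma := (@in_lgamma R n i).
Notation in_zlpl := (@in_zl_plus_lngamma R n i).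
Notation lg := (@lg R n i).

Lemma Xm_entry x y (r s : 'I_N) : (r.+1 <= i)%N -> (1 <= y)%N ->
  Xminus x y r s = ((r.+1 == x) && (s.+1 == y))%:R.
Proof.
move=> Hr Hy; rewrite /Xminus !mxE.
by rewrite (_ : (r.+1 == hat y) = false) ?subr0 //; rewrite /hat; lia.
Qed.

Lemma lg_entry a (r s : 'I_N) : (r.+1 <= i)%N -> (s.+1 <= i)%N -> lg a r s = a r.+1 s.+1.
Proof.
move=> Hr Hs.
rewrite /lg summxE (eq_big_nat _ _ (F2 := fun x => if r.+1 == x then a x s.+1 else 0)).
  by rewrite sum_nat_if //; lia.
move=> x Hx; rewrite summxE (eq_big_nat _ _
   (F2 := fun y => if s.+1 == y then (if r.+1 == x then a x y else 0) else 0)).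
  by rewrite sum_nat_if //; lia.
move=> y Hy; rewrite mxE Xm_entry; [|lia|lia].
by case: (r.+1 == x); case: (s.+1 == y); rewrite ?mulr1 ?mulr0.
Qed.

Lemma zl_entry (r s : 'I_N) : (r.+1 <= i)%N ->
  (\sum_(1 <= j < i.+1) (E j j - E (hat j) (hat j))) r s = (r.+1 == s.+1)%:R.
Proof.
move=> Hr; rewrite summxE (eq_big_nat _ _ (F2 := fun j => if r.+1 == j then (s.+1 == j)%:R else 0)).
  by rewrite sum_nat_if 1?eq_sym //; lia.
move=> j Hj; rewrite !mxE.
rewrite (_ : (r.+1 == hat j) = false); last by rewrite /hat; lia.
by case: (r.+1 == j); rewrite andFb (natrF R) subr0 ?andTb.
Qed.

Lemma inter0 S : in_lgamma S -> in_zlpl S -> S = 0.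
Proof.
move=> [a [Htr ->]] [Y1 [Y2 [[cz HY1] [[_ HY2] Heq]]]].
have Hent : forall x y, (1 <= x <= i)%N -> (1 <= y <= i)%N -> a x y = cz * (x == y)%:R.
  move=> x y Hx Hy.
  have hx : (x.-1 < N)%N by lia.
  have hy : (y.-1 < N)%N by lia.
  have := congr1 (fun M : mat => M (Ordinal hx) (Ordinal hy)) Heq.
  have ex : (Ordinal hx).+1 = x by rewrite /= prednK //; lia.
  have ey : (Ordinal hy).+1 = y by rewrite /= prednK //; lia.
  rewrite -/(lg a) lg_entry; [|simpl; lia|simpl; lia].
  rewrite mxE HY1 mxE zl_entry; last by simpl; lia.
  rewrite HY2; last by rewrite /outer_idx ex; lia.
  by rewrite addr0 ex ey.
have Hcz : cz = 0.
  move: Htr; rewrite (eq_big_nat _ _ (F2 := fun _ => cz)); last first.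
    by move=> x Hx; rewrite Hent ?eqxx ?mulr1 //; lia.
  rewrite sumr_const_nat subn1 => /eqP.
  rewrite -mulr_natr mulf_eq0 => /orP [/eqP //|].
  by rewrite pnatr_eq0; lia.
rewrite big_nat_cond big1 // => x /andP [Hx _].
rewrite big_nat_cond big1 // => y /andP [Hy _].
by rewrite Hent ?Hcz ?mul0r ?scale0r //; lia.
Qed.

Lemma pr_unique T : @is_pr_lgamma_zn R n i (@tau2 R n i c0 Xm) T -> T = Tst.
Proof.
move=> [[HTa HTb] HD]; rewrite (tau2_dec Hn Hi Hc0) in HD.
have HU := subsp_lgamma R n i; have HW := subsp_zn R n i; have HV := subsp_zlpl R n i.
have H1 : tens_in in_lgamma in_zn (Tst - T).
  apply: tens_B => //; first [exact: (Tst_in Hn Hi) | by split].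
have H2 : tens_in in_zlpl in_zn (Tst - T).
  rewrite (_ : Tst - T = Tst + Dst - T - Dst); last by rewrite addrAC addrK.
  apply: tens_B => //; exact: (Dst_in Hn Hi).
apply/eqP; rewrite eq_sym -subr_eq0; apply/eqP.
apply/ffunP => -[a b]; apply/matrixP => r s.
have := inter0 (H1.2 r s) (H2.2 r s).
move/(congr1 (fun M : mat => M a b)); rewrite !mxE => ->.
by rewrite ffunE mxE.
Qed.
End S7.

Section S8.
Variable R : numClosedFieldType.
Variables n i : nat.
Hypothesis Hn : (3 <= n)%N.
Hypothesis Hi : (2 <= i <= n.-1)%N.
Notation N := (n + n)%N.
Notation mat := 'M[R]_N.
Notation E := (@E R n).
Notation hat := (hat n).
Notation m := i.+1.
Notation Xplus := (@Xplus R n).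
Notation Xminus := (@Xminus R n).
Notation cartan := (@cartan R n).

Ltac coll0_H := rewrite collapse0; last (move=> ? ?; rewrite /hat; lia).
Ltac coll_H v := rewrite (@collapse _ _ _ _ v); [ | lia | move=> ? ?; rewrite /hat; lia].
Ltac mxring_H := apply/matrixP => ? ?; rewrite !mxE; ring.

Lemma collapseS (hh : nat -> R) (F : nat -> mat) (P : nat -> bool) x : (1 <= x <= n)%N ->
  (forall j, (1 <= j <= n)%N -> P j = (x == j)) ->
  \sum_(1 <= j < n.+1) hh j *: ((P j)%:R *: F j) = hh x *: F x.
Proof.
move=> Hx HP.
under eq_bigr => j _ do rewrite scalerA mulrC -scalerA.
by rewrite (@collapse _ _ (fun j => hh j *: F j) _ x).
Qed.
Lemma collapseS0 (hh : nat -> R) (F : nat -> mat) (P : nat -> bool) :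
  (forall j, (1 <= j <= n)%N -> P j = false) ->
  \sum_(1 <= j < n.+1) hh j *: ((P j)%:R *: F j) = 0.
Proof.
move=> HP.
under eq_bigr => j _ do rewrite scalerA mulrC -scalerA.
by rewrite (@collapse0 _ _ (fun j => hh j *: F j)).
Qed.
Ltac cs0_H := rewrite collapseS0; last (move=> ? ?; rewrite /hat; lia).
Ltac cs_H v := rewrite (@collapseS _ _ _ v); [ | lia | move=> ? ?; rewrite /hat; lia].

Lemma CE1 h a b : (1 <= a <= n)%N -> cartan h *m E a b = h a *: E a b.
Proof.
move=> Ha; rewrite /cartan mulmx_suml.
under eq_bigr => j _ do rewrite -scalemxAl mulmxBl !mulE scalerBr.
by rewrite sumrB; cs_H a; cs0_H; rewrite subr0.
Qed.
Lemma CE2 h a b : (1 <= a <= n)%N -> cartan h *m E (hat a) b = - h a *: E (hat a) b.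
Proof.
move=> Ha; rewrite /cartan mulmx_suml.
under eq_bigr => j _ do rewrite -scalemxAl mulmxBl !mulE scalerBr.
by rewrite sumrB; cs0_H; cs_H a; rewrite sub0r scaleNr.
Qed.
Lemma EC1 h a b : (1 <= b <= n)%N -> E a b *m cartan h = h b *: E a b.
Proof.
move=> Hb; rewrite /cartan mulmx_sumr.
under eq_bigr => j _ do rewrite -scalemxAr mulmxBr !mulE scalerBr.
by rewrite sumrB; cs_H b; cs0_H; rewrite subr0.
Qed.
Lemma EC2 h a b : (1 <= b <= n)%N -> E a (hat b) *m cartan h = - h b *: E a (hat b).
Proof.
move=> Hb; rewrite /cartan mulmx_sumr.
under eq_bigr => j _ do rewrite -scalemxAr mulmxBr !mulE scalerBr.
by rewrite sumrB; cs0_H; cs_H b; rewrite sub0r scaleNr.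
Qed.

Ltac Csimp_H := rewrite ?(CE2, EC2); try lia; rewrite ?(CE1, EC1); try lia.

Lemma adC_Xminus h a k : (1 <= a <= n)%N -> (1 <= k <= n)%N ->
  ad (cartan h) (Xminus a k) = (h a - h k) *: Xminus a k.
Proof.
move=> Ha Hk; rewrite /ad /Xminus mulmxBr mulmxBl. Csimp_H. mxring_H.
Qed.
Lemma adC_Xplus h a k : (1 <= a <= n)%N -> (1 <= k <= n)%N ->
  ad (cartan h) (Xplus a k) = (h a + h k) *: Xplus a k.
Proof.
move=> Ha Hk; rewrite /ad /Xplus mulmxDr mulmxDl. Csimp_H. mxring_H.
Qed.

Lemma natrF' : false%:R = 0 :> R. Proof. by []. Qed.
Lemma natrT' : true%:R = 1 :> R. Proof. by []. Qed.
Ltac clean_H := rewrite ?natrF' ?natrT' ?scale0r ?scale1r ?addr0 ?add0r ?subr0 ?sub0r.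

Lemma adS_Xminus j a k : (1 <= j < n)%N -> (1 <= a <= n)%N -> (1 <= k <= n)%N ->
  ad (Xminus j j.+1) (Xminus a k) = (a == j.+1)%:R *: Xminus j k - (k == j)%:R *: Xminus a j.+1.
Proof.
move=> Hj Ha Hk; rewrite /Xminus !(adBl, adBr) !ad_EE.
case: (eqVneq a j.+1) => [->|Ha']; case: (eqVneq k j) => [->|Hk']; bsimp; clean_H; mxring_H.
Qed.
Lemma adS_Xplus j a k : (1 <= j < n)%N -> (1 <= a <= n)%N -> (1 <= k <= n)%N ->
  ad (Xminus j j.+1) (Xplus a k) = (a == j.+1)%:R *: Xplus j k + (k == j.+1)%:R *: Xplus a j.
Proof.
move=> Hj Ha Hk; rewrite /Xminus /Xplus !(adBl, adDr) !ad_EE.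
case: (eqVneq a j.+1) => [->|Ha']; case: (eqVneq k j.+1) => [->|Hk']; bsimp; clean_H; mxring_H.
Qed.
Lemma adT_Xminus a k : (1 <= a <= i)%N -> (1 <= k <= i)%N -> ad (@Xtwo R n n) (Xminus a k) = 0.
Proof. move=> Ha Hk; rewrite /Xminus /Xtwo !(adBr) !ad_EE; bsimp; clean_H; mxring_H. Qed.
Lemma adT_Xplus a k : (1 <= a <= i)%N -> (1 <= k <= i)%N -> ad (@Xtwo R n n) (Xplus a k) = 0.
Proof. move=> Ha Hk; rewrite /Xplus /Xtwo !(adDr) !ad_EE; bsimp; clean_H; mxring_H. Qed.
End S8.

Section S9.
Variable R : numClosedFieldType.
Variables n i : nat.
Hypothesis Hn : (3 <= n)%N.
Hypothesis Hi : (2 <= i <= n.-1)%N.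
Variable c0 : R.
Hypothesis Hc0 : c0 != 0.
Notation N := (n + n)%N.
Notation mat := 'M[R]_N.
Notation E := (@E R n).
Notation hat := (hat n).
Notation m := i.+1.
Notation Xplus := (@Xplus R n).
Notation Xminus := (@Xminus R n).
Notation cartan := (@cartan R n).
Notation tpure := (@tpure R n).
Notation tact := (@tact R n).
Notation tens := (@tens R n).
Notation Tst := (@Tst R n i c0).

Lemma natrF_I : false%:R = 0 :> R. Proof. by []. Qed.
Lemma natrT_I : true%:R = 1 :> R. Proof. by []. Qed.
Ltac clean_I := rewrite ?natrF_I ?natrT_I ?scale0r ?scale1r ?addr0 ?add0r ?subr0 ?sub0r.
Ltac tring_I := apply/ffunP => ? ; apply/matrixP => ? ?; rewrite !(ffunE, mxE); ring.

Lemma weight h : tact (cartan h) Tst = (h 1 + h 2) *: Tst.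
Proof.
rewrite /Tst tactZ tact_sum scalerA [(h 1 + h 2) * _]mulrC -scalerA.
congr (_ *: _); rewrite scaler_sumr; apply: eq_big_nat => k Hk.
rewrite tactB !tact_pure !(adC_Xminus Hn Hi) ?(adC_Xplus Hn Hi); try lia.
rewrite !(tpureZl, tpureZr).
tring_I.
Qed.

Definition W j := tpure (Xminus 1 j.+1) (Xplus 2 j) - tpure (Xminus 2 j.+1) (Xplus 1 j).

Lemma stepk_lt j k : (1 <= j < i)%N -> (1 <= k <= i)%N ->
  tact (Xminus j j.+1) (tpure (Xminus 2 k) (Xplus 1 k) - tpure (Xminus 1 k) (Xplus 2 k))
  = (k == j)%:R *: W j + (k == j.+1)%:R *: (- W j).
Proof.
move=> Hj Hk; rewrite tactB !tact_pure.
rewrite !(adS_Xminus _ Hn Hi); try lia.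
rewrite !(adS_Xplus _ Hn Hi); try lia.
rewrite /W.
case: (eqVneq k j) => [E1|H1]; case: (eqVneq k j.+1) => [E2|H2]; case: (eqVneq j 1) => [E3|H3];
  try (exfalso; lia); subst; bsimp; clean_I; tring_I.
Qed.

Lemma root_lt j : (1 <= j < i)%N -> tact (Xminus j j.+1) Tst = 0.
Proof.
move=> Hj; rewrite /Tst tactZ tact_sum.
rewrite (eq_big_nat _ _ (F2 := fun k => (k == j)%:R *: W j + (k == j.+1)%:R *: (- W j))); last first.
  by move=> k Hk; apply: stepk_lt; lia.
rewrite big_split /= (@collapseG _ _ _ _ _ _ j) ?(@collapseG _ _ _ _ _ _ j.+1);
  try lia; try (by move=> ? ?; lia).
by rewrite subrr scaler0.
Qed.

Lemma stepk_gt j k : (i < j < n)%N -> (1 <= k <= i)%N ->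
  tact (Xminus j j.+1) (tpure (Xminus 2 k) (Xplus 1 k) - tpure (Xminus 1 k) (Xplus 2 k)) = 0.
Proof.
move=> Hj Hk; rewrite tactB !tact_pure.
rewrite !(adS_Xminus _ Hn Hi); try lia.
rewrite !(adS_Xplus _ Hn Hi); try lia.
bsimp; clean_I; tring_I.
Qed.
Lemma root_gt j : (i < j < n)%N -> tact (Xminus j j.+1) Tst = 0.
Proof.
move=> Hj; rewrite /Tst tactZ tact_sum big_nat_cond big1 ?scaler0 // => k /andP [Hk _].
by apply: stepk_gt; lia.
Qed.
Lemma root_n : tact (@Xtwo R n n) Tst = 0.
Proof.
rewrite /Tst tactZ tact_sum big_nat_cond big1 ?scaler0 // => k /andP [Hk _].
rewrite tactB !tact_pure.
rewrite !(adT_Xminus _ Hn Hi); try lia.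
rewrite !(adT_Xplus _ Hn Hi); try lia.
by rewrite !(tpure0l, tpure0r) !addr0 subrr.
Qed.

Lemma Tst_nz : Tst != 0.
Proof.
apply/eqP => H.
have h1 : (1 < N)%N by lia.
have h0 : (0 < N)%N by lia.
have hn : (n < N)%N by lia.
have := congr1 (fun T : tens => T (Ordinal h1, Ordinal h0) (Ordinal h0) (Ordinal hn)) H.
rewrite /Tst ffunE mxE sum_ffunE summxE ffunE mxE.
rewrite (eq_big_nat _ _ (F2 := fun k => if 1 == k then 2 else 0)); last first.
  move=> k Hk; rewrite !(ffunE, mxE) /=.
  case: (eqVneq k 1) => [E1|H1]; try subst k; bsimp; clean_I.
  all: try ring.
rewrite sum_nat_if; last by lia.
move/eqP; rewrite mulf_eq0 invr_eq0 mulf_eq0 (negbTE Hc0) orbF.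
by rewrite !pnatr_eq0.
Qed.
End S9.

Theorem proposition5p3 (R : numClosedFieldType) (n i : nat) (c0 : R) :
  (3 <= n)%N -> (2 <= i <= n.-1)%N -> 0 < c0 ->
  let X := @Xplus R n 1 i.+1 + @Xminus R n 2 i.+1 in       (* X_mu + X_{eps_gamma} *)
  let lam := fun h : nat -> R => h 1%N + h 2%N in    (* mu + eps_gamma = e_1 + e_2 *)
  (exists T, @is_pr_lgamma_zn R n i (@tau2 R n i c0 X) T) /\
  (forall T, @is_pr_lgamma_zn R n i (@tau2 R n i c0 X) T -> @is_hwv R n i lam T).
Proof.
move=> Hn Hi Hc X lam.
have Hc0 : c0 != 0 by rewrite lt0r_neq0.
split; first by exists (Tst n i c0); exact: (pr_exists Hn Hi Hc0).
move=> T HT; rewrite (pr_unique Hn Hi Hc0 HT).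
split; first exact: (Tst_nz Hn Hi Hc0).
split; first by move=> h; exact: (weight Hn Hi).
move=> j Hj Hji; rewrite /Xsimple; case: ltnP => Hjn.
  case: (ltnP j i) => Hji'.
    by apply: (root_lt Hn Hi); lia.
  by apply: (root_gt Hn Hi); lia.
exact: (root_n Hn Hi).
Qed.
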